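(* In the two-tier residency matching game described in the context (list length $K$, high-match value $v>1$), under the large market approximation, if a symmetric equilibrium exists for high doctors, then it is either an equilibrium in pure strategies, or a mixed strategy equilibrium in which high doctors randomize between two consecutive strategies $(k,K-k)$ and $(k+1,K-k-1)$ for some integer $k$.
   Context: Model: there are high-tier and low-tier doctors and high-tier and low-tier hospitals, each hospital having one position. Every hospital prefers every high doctor to every low doctor, and every doctor prefers every high hospital to every low hospital; within a tier, preferences are independent uniformly random permutations. Each doctor submits a ranked list of exactly $K$ hospitals; hospitals submit full true rankings; doctor-proposing deferred acceptance is run. A doctor's strategy is a pair $(k,K-k)$: he lists his $k$ most preferred high hospitals followed by his $K-k$ most preferred low hospitals. A doctor gets value $v>1$ if matched to a high hospital, $1$ if matched to a low one, $0$ otherwise. Large market approximation: in the limit of many agents (tier proportions, $K$, $v$ fixed), given the strategy profile, each application of a high doctor to a high (resp. low) hospital is accepted independently with a probability $p$ (resp. $p'$) determined by the aggregate profile via fixed-point equations (expected matched doctors = expected hospitals receiving at least one application, a hospital with on average $\lambda$ applications receiving none with probability $e^{-\lambda}$), and unaffected by an individual doctor's choice. Since hospitals rank all high doctors above low ones, the high doctors' assignment does not depend on low doctors. A symmetric equilibrium for high doctors is a (possibly mixed) strategy used by all high doctors such that every strategy in its support maximizes a high doctor's expected value given $p,p'$. *)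

(* Defs.v *)
From Stdlib Require Import Reals Lra.
Open Scope R_scope.

(* Strategies of a high doctor are indexed by k in {0,...,K}: strategy (k, K-k).
   A (possibly mixed) symmetric strategy is sigma : nat -> R, sigma k being the
   probability of playing (k, K-k); only k = 0..K are meaningful.
   p  : acceptance probability of an application of a high doctor to a high hospital
   p' : acceptance probability of an application of a high doctor to a low hospital
   Applications are accepted independently; in doctor-proposing DA a doctor is
   matched to the first hospital of his list that accepts him. *)

Fixpoint gsum (x : R) (n : nat) : R :=
  match n with
  | O => 0
  | S m => gsum x m + x ^ m
  end.

Definition prob_high (p : R) (k : nat) : R := 1 - (1 - p) ^ k.

Definition prob_low (K : nat) (p p' : R) (k : nat) : R :=
  (1 - p) ^ k * (1 - (1 - p') ^ (K - k)).

Definition value (K : nat) (v p p' : R) (k : nat) : R :=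
  v * prob_high p k + prob_low K p p' k.

Definition apps_high (p : R) (k : nat) : R := gsum (1 - p) k.
Definition apps_low (K : nat) (p p' : R) (k : nat) : R :=
  (1 - p) ^ k * gsum (1 - p') (K - k).

Definition mixed_strategy (K : nat) (sigma : nat -> R) : Prop :=
  (forall k, (k <= K)%nat -> 0 <= sigma k) /\ sum_f_R0 sigma K = 1.

(* Large-market fixed point equations. dH, hH, hL are the (relative) masses of
   high doctors, high hospitals and low hospitals. Expected matched doctors in
   each tier = expected number of hospitals of that tier receiving at least one
   application, a hospital receiving lambda applications on average receiving
   none with probability exp(-lambda). *)
Definition fixed_point (K : nat) (dH hH hL : R) (sigma : nat -> R) (p p' : R) : Prop :=
  0 <= p <= 1 /\ 0 <= p' <= 1 /\
  dH * sum_f_R0 (fun k => sigma k * prob_high p k) K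
    = hH * (1 - exp (- (dH * sum_f_R0 (fun k => sigma k * apps_high p k) K / hH))) /\
  dH * sum_f_R0 (fun k => sigma k * prob_low K p p' k) K
    = hL * (1 - exp (- (dH * sum_f_R0 (fun k => sigma k * apps_low K p p' k) K / hL))).

Definition symmetric_equilibrium (K : nat) (v dH hH hL : R) (sigma : nat -> R) : Prop :=
  mixed_strategy K sigma /\
  exists p p', fixed_point K dH hH hL sigma p p' /\
    forall k, (k <= K)%nat -> sigma k > 0 ->
      forall j, (j <= K)%nat -> value K v p p' j <= value K v p p' k.

Definition pure_strategy (K : nat) (sigma : nat -> R) : Prop :=
  exists k, (k <= K)%nat /\ sigma k = 1.

Definition mixes_two_consecutive (K : nat) (sigma : nat -> R) : Prop :=
  exists k, (k + 1 <= K)%nat /\ sigma k > 0 /\ sigma (k + 1)%nat > 0 /\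
    sigma k + sigma (k + 1)%nat = 1.

(* Main.v *)
Require Import Defs.
From Stdlib Require Import Reals.
From Stdlib Require Import Lra Lia Psatz.
Open Scope R_scope.

Lemma sum_ext (f g : nat -> R) (K : nat) :
  (forall k, (k <= K)%nat -> f k = g k) -> sum_f_R0 f K = sum_f_R0 g K.
Proof.
  induction K; intros H; simpl.
  - apply H; lia.
  - rewrite IHK by (intros; apply H; lia). rewrite H by lia. reflexivity.
Qed.

Lemma term_le_sum (f : nat -> R) (K : nat) :
  (forall k, (k <= K)%nat -> 0 <= f k) ->
  forall k, (k <= K)%nat -> f k <= sum_f_R0 f K.
Proof.
  induction K; intros H k Hk; simpl.
  - replace k with 0%nat by lia. lra.
  - assert (0 <= sum_f_R0 f K).
    { clear IHK Hk. induction K; simpl. apply H; lia.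
      assert (0 <= f (S K)) by (apply H; lia).
      assert (0 <= sum_f_R0 f K) by (apply IHK; intros; apply H; lia). lra. }
    destruct (Nat.eq_dec k (S K)) as [->|].
    + lra.
    + assert (f k <= sum_f_R0 f K) by (apply IHK; [intros; apply H; lia | lia]).
      assert (0 <= f (S K)) by (apply H; lia). lra.
Qed.

Lemma sum_two (f : nat -> R) (a b : nat) :
  a <> b -> forall K,
  (forall k, (k <= K)%nat -> k <> a -> k <> b -> f k = 0) ->
  sum_f_R0 f K = (if Nat.leb a K then f a else 0) + (if Nat.leb b K then f b else 0).
Proof.
  intros Hab K; induction K; intros H; simpl.
  - destruct a; destruct b; simpl; try lia.
    + lra.
    + lra.
    + rewrite H by lia. lra.
  - rewrite IHK by (intros; apply H; lia).
    destruct (Nat.eq_dec a (S K)) as [->|Ha].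
    + rewrite Nat.leb_refl.
      assert (Hb: Nat.leb b (S K) = Nat.leb b K).
      { destruct (Nat.leb_spec b (S K)); destruct (Nat.leb_spec b K); lia. }
      rewrite Hb. replace (Nat.leb (S K) K) with false.
      lra. symmetry; apply Nat.leb_gt; lia.
    + destruct (Nat.eq_dec b (S K)) as [->|Hb].
      * rewrite Nat.leb_refl. replace (Nat.leb (S K) K) with false
          by (symmetry; apply Nat.leb_gt; lia).
        assert (Ha': Nat.leb a (S K) = Nat.leb a K).
        { destruct (Nat.leb_spec a (S K)); destruct (Nat.leb_spec a K); lia. }
        rewrite Ha'. lra.
      * rewrite (H (S K)) by lia.
        assert (Ha': Nat.leb a (S K) = Nat.leb a K).
        { destruct (Nat.leb_spec a (S K)); destruct (Nat.leb_spec a K); lia. }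
        assert (Hb': Nat.leb b (S K) = Nat.leb b K).
        { destruct (Nat.leb_spec b (S K)); destruct (Nat.leb_spec b K); lia. }
        rewrite Ha', Hb'. lra.
Qed.

Lemma combin (K : nat) (sigma : nat -> R) :
  mixed_strategy K sigma ->
  (forall i j, (i < j)%nat -> (j <= K)%nat -> sigma i > 0 -> sigma j > 0 -> j = S i) ->
  pure_strategy K sigma \/ mixes_two_consecutive K sigma.
Proof.
  intros [Hnn Hsum] Hcons.
  assert (Hex: exists a, (a <= K)%nat /\ sigma a > 0).
  { apply Classical_Pred_Type.not_all_not_ex. intros Hn.
    rewrite sum_eq_R0 in Hsum. lra.
    intros n Hn'. specialize (Hn n). specialize (Hnn n Hn').
    destruct (Rle_lt_or_eq_dec _ _ Hnn); [|auto].
    exfalso; apply Hn; split; auto. }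
  destruct Hex as [a [HaK Ha]].
  destruct (Classical_Prop.classic (exists b, (b <= K)%nat /\ b <> a /\ sigma b > 0))
    as [[b [HbK [Hba Hb]]]|Hno].
  -
    set (i := Nat.min a b). set (j := Nat.max a b).
    assert (Hij: j = S i).
    { unfold i, j. destruct (Nat.lt_ge_cases a b).
      + rewrite Nat.min_l, Nat.max_r by lia. apply Hcons; auto.
      + rewrite Nat.min_r, Nat.max_l by lia. apply Hcons; auto; lia. }
    assert (Hi: sigma i > 0) by (unfold i; destruct (Nat.le_ge_cases a b);
      [rewrite Nat.min_l by lia | rewrite Nat.min_r by lia]; auto).
    assert (Hj: sigma j > 0) by (unfold j; destruct (Nat.le_ge_cases a b);
      [rewrite Nat.max_r by lia | rewrite Nat.max_l by lia]; auto).
    assert (HjK: (j <= K)%nat) by (unfold j; lia).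
    right. exists i. replace (i + 1)%nat with j by lia.
    repeat split; try lia; auto.
    rewrite (sum_two sigma i j ltac:(lia) K) in Hsum.
    + rewrite (proj2 (Nat.leb_le i K)) in Hsum by lia.
      rewrite (proj2 (Nat.leb_le j K)) in Hsum by lia. exact Hsum.
    + intros k Hk Hki Hkj.
      destruct (Rle_lt_or_eq_dec _ _ (Hnn k Hk)) as [Hp|]; [|auto].
      exfalso. destruct (Nat.lt_ge_cases k i).
      * assert (i = S k) by (apply Hcons; auto; lia).
        assert (j = S k) by (apply Hcons; auto; lia). lia.
      * assert (k = S i) by (apply Hcons; auto; lia). lia.
  - left. exists a. split; auto.
    rewrite (sum_two sigma a (S K) ltac:(lia) K) in Hsum.
    + rewrite (proj2 (Nat.leb_le a K)) in Hsum by lia.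
      replace (Nat.leb (S K) K) with false in Hsum
        by (symmetry; apply Nat.leb_gt; lia). lra.
    + intros k Hk Hka _.
      destruct (Rle_lt_or_eq_dec _ _ (Hnn k Hk)) as [Hp|]; [|auto].
      exfalso; apply Hno; exists k; auto.
Qed.

Lemma gsum1 k : gsum 1 k = INR k.
Proof. induction k; simpl gsum. reflexivity. rewrite IHk, pow1, S_INR. lra. Qed.

Lemma gsum0 k : gsum 0 k = 1 - 0 ^ k.
Proof.
  induction k; simpl gsum. simpl; lra.
  rewrite IHk. destruct k. simpl; lra. rewrite !pow_i by lia. lra.
Qed.

Lemma fix_zero (x : R) : 0 <= x -> x = 1 - exp (- x) -> x = 0.
Proof.
  intros Hx H. destruct (Req_dec x 0); auto.
  assert (1 + - x < exp (- x)) by (apply exp_ineq1; lra). lra.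
Qed.

Lemma concave (K : nat) (v p p' : R) (k : nat) :
  v > 1 -> 0 < p < 1 -> 0 <= p' <= 1 -> (k + 2 <= K)%nat ->
  value K v p p' k + value K v p p' (k + 2) < 2 * value K v p p' (k + 1).
Proof.
  intros Hv Hp Hp' HK.
  destruct (Nat.le_exists_sub (k+2) K HK) as [n [-> _]].
  unfold value, prob_high, prob_low.
  replace (n + (k + 2) - k)%nat with (S (S n)) by lia.
  replace (n + (k + 2) - (k + 1))%nat with (S n) by lia.
  replace (n + (k + 2) - (k + 2))%nat with n by lia.
  rewrite !Nat.add_succ_r, !Nat.add_0_r. simpl pow.
  set (q := 1 - p). set (r := 1 - p').
  assert (0 < q ^ k) by (apply pow_lt; unfold q; lra).
  assert (0 <= r ^ n) by (apply pow_le; unfold r; lra).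
  assert (0 < q ^ k * (1 - q) * (1 - q)).
  { apply Rmult_lt_0_compat; [apply Rmult_lt_0_compat; [lra|]|]; unfold q; lra. }
  assert (0 <= q ^ k * r ^ n * (r - q) * (r - q)).
  { rewrite Rmult_assoc. apply Rmult_le_pos; [apply Rmult_le_pos; lra|]. apply Rle_0_sqr. }
  nra.
Qed.

Lemma concave_gen (K : nat) (v p p' : R) (i : nat) :
  v > 1 -> 0 < p < 1 -> 0 <= p' <= 1 ->
  forall d, (i + d + 2 <= K)%nat ->
  value K v p p' (i + d + 2) - value K v p p' (i + d + 1)
  < value K v p p' (i + 1) - value K v p p' i.
Proof.
  intros Hv Hp Hp' d. induction d; intros Hd.
  - pose proof (concave K v p p' i Hv Hp Hp' ltac:(lia)).
    replace (i + 0 + 2)%nat with (i + 2)%nat by lia.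
    replace (i + 0 + 1)%nat with (i + 1)%nat by lia. lra.
  - pose proof (concave K v p p' (i + d + 1) Hv Hp Hp' ltac:(lia)).
    specialize (IHd ltac:(lia)).
    replace (i + S d + 2)%nat with (i + d + 1 + 2)%nat by lia.
    replace (i + S d + 1)%nat with (i + d + 1 + 1)%nat by lia.
    replace (i + d + 1 + 1)%nat with (i + d + 2)%nat in * by lia.
    lra.
Qed.

Theorem lemma1 (K : nat) (v dH hH hL : R) (sigma : nat -> R) :
  v > 1 -> dH > 0 -> hH > 0 -> hL > 0 ->
  symmetric_equilibrium K v dH hH hL sigma ->
  pure_strategy K sigma \/ mixes_two_consecutive K sigma.
Proof.
  intros Hv HdH HhH HhL [Hms [p [p' [[Hp [Hp' [Eh El]]] Heq]]]].
  apply combin; auto.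
  pose proof (proj1 Hms) as Hnn.
  intros i j Hij HjK Hi Hj.
  destruct (Rle_lt_or_eq_dec _ _ (proj1 Hp)) as [Hp0|Hp0].
  - destruct (Rle_lt_or_eq_dec _ _ (proj2 Hp)) as [Hp1|Hp1].
    +
      destruct (Nat.eq_dec j (S i)); auto. exfalso.
      destruct (Nat.le_exists_sub (i+2) j ltac:(lia)) as [d [Hd _]].
      pose proof (concave_gen K v p p' i Hv (conj Hp0 Hp1) Hp' d ltac:(lia)) as C.
      replace (i + d + 2)%nat with j in C by lia.
      assert (value K v p p' (i + 1) <= value K v p p' i) by (apply Heq; auto; lia).
      assert (value K v p p' (i + d + 1) <= value K v p p' j) by (apply Heq; auto; lia).
      lra.
    +
      subst p. exfalso.
      set (s := sum_f_R0 (fun k => sigma k * (1 - 0 ^ k)) K).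
      assert (E1: sum_f_R0 (fun k => sigma k * prob_high 1 k) K = s).
      { apply sum_ext; intros; unfold prob_high; replace (1 - 1) with 0 by ring; auto. }
      assert (E2: sum_f_R0 (fun k => sigma k * apps_high 1 k) K = s).
      { apply sum_ext; intros; unfold apps_high; replace (1 - 1) with 0 by ring;
        rewrite gsum0; auto. }
      rewrite E1, E2 in Eh.
      assert (Hnn2: forall k, (k <= K)%nat -> 0 <= sigma k * (1 - 0 ^ k)).
      { intros k Hk. apply Rmult_le_pos; auto. destruct k; [simpl; lra | rewrite pow_i by lia; lra]. }
      assert (Hs: 0 <= s).
      { unfold s. eapply Rle_trans; [apply (Hnn2 0%nat); lia | apply (term_le_sum _ K Hnn2 0%nat); lia]. }
      assert (Hx: dH * s / hH = 0).
      { apply fix_zero. apply Rmult_le_pos; [nra | left; apply Rinv_0_lt_compat; lra].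
        rewrite Eh at 1. field. lra. }
      assert (s = 0).
      { unfold Rdiv in Hx. apply Rmult_integral in Hx. destruct Hx as [Hx|Hx].
        nra. exfalso; apply (Rinv_neq_0_compat hH); lra. }
      pose proof (term_le_sum _ K Hnn2 j HjK) as T. simpl in T.
      rewrite pow_i in T by lia. fold s in T. lra.
  -
    subst p. exfalso.
    set (s := sum_f_R0 (fun k => sigma k * INR k) K).
    assert (E1: sum_f_R0 (fun k => sigma k * prob_high 0 k) K = 0).
    { apply sum_eq_R0; intros; unfold prob_high; replace (1 - 0) with 1 by ring;
      rewrite pow1; ring. }
    assert (E2: sum_f_R0 (fun k => sigma k * apps_high 0 k) K = s).
    { apply sum_ext; intros; unfold apps_high; replace (1 - 0) with 1 by ring;
      rewrite gsum1; auto. }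
    rewrite E1, E2 in Eh.
    assert (Hnn2: forall k, (k <= K)%nat -> 0 <= sigma k * INR k).
    { intros k Hk. apply Rmult_le_pos; auto. apply pos_INR. }
    assert (Hs: 0 <= s).
    { unfold s. eapply Rle_trans; [apply (Hnn2 0%nat); lia | apply (term_le_sum _ K Hnn2 0%nat); lia]. }
    assert (Hx: exp (- (dH * s / hH)) = 1).
    { assert (1 - exp (- (dH * s / hH)) = 0).
      { apply (Rmult_eq_reg_l hH). rewrite <- Eh. ring. lra. } lra. }
    assert (dH * s / hH = 0).
    { rewrite <- exp_0 in Hx. apply exp_inv in Hx. lra. }
    assert (s = 0).
    { unfold Rdiv in H. apply Rmult_integral in H. destruct H as [H|H].
      nra. exfalso; apply (Rinv_neq_0_compat hH); lra. }
    pose proof (term_le_sum _ K Hnn2 j HjK). fold s in H1.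
    assert (1 <= INR j) by (apply (le_INR 1); lia). nra.
Qed.
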